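(* Consider the system \[ \begin{aligned} \dot S_h(t)&=\beta_h-C_{vh}\frac{I_v(t)}{N_v(t)}S_h(t)-\mu_hS_h(t),\\ \dot I_h(t)&=C_{vh}\frac{I_v(t-\tau)}{N_v(t-\tau)}S_h(t-\tau)-\mu_hI_h(t),\\ \dot S_v(t)&=\beta_v-C_{hv}I_h(t)S_v(t)-\mu_vS_v(t),\\ \dot I_v(t)&=C_{hv}I_h(t)S_v(t)-\mu_vI_v(t), \end{aligned} \] with $N_v=S_v+I_v$ and positive parameters $\beta_h,\beta_v,\mu_h,\mu_v,C_{vh},C_{hv}$. Let $R_0=\sqrt{C_{vh}C_{hv}\beta_h/(\mu_h^2\mu_v)}$. If $R_0>1$, then for every $\tau\ge0$ the system is weakly persistent in $D$.
   Context: $C_+=\{\varphi\in C([-\tau,0],\mathbb{R}_+^4):\varphi_3(\theta)+\varphi_4(\theta)>0\ \forall\theta\in[-\tau,0]\}$ with the sup-norm, and $D=\{\varphi\in C_+:\varphi_2(0)>0\}$. The system is called weakly persistent (in $D$) if for the solution through any $\varphi\in D$, $\limsup_{t\to\infty}u(t)>0$ for each $u\in\{S_h,I_h,S_v,I_v\}$. *)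

(* Defs.v *)
From Stdlib Require Import Reals Lra.
From Coquelicot Require Import Coquelicot.
Open Scope R_scope.

Definition cont_within_ge (a : R) (f : R -> R) (t : R) : Prop :=
  filterlim f (within (fun s => a <= s) (locally t)) (locally (f t)).

(* The initial history (the restriction of (Sh,Ih,Sv,Iv) to [-tau,0])
   belongs to D = { phi in C_+ : phi_2(0) > 0 }, where
   C_+ = { phi in C([-tau,0], R_+^4) : phi_3(θ) + phi_4(θ) > 0 on [-tau,0] }.
   Continuity of phi on [-tau,0] is part of [is_solution] below. *)
Definition history_in_D (tau : R) (Sh Ih Sv Iv : R -> R) : Prop :=
  (forall th, -tau <= th <= 0 ->
     0 <= Sh th /\ 0 <= Ih th /\ 0 <= Sv th /\ 0 <= Iv th /\
     0 < Sv th + Iv th) /\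
  0 < Ih 0.

Definition is_solution (beta_h beta_v mu_h mu_v C_vh C_hv tau : R)
    (Sh Ih Sv Iv : R -> R) : Prop :=
  (forall t, -tau <= t ->
     cont_within_ge (-tau) Sh t /\ cont_within_ge (-tau) Ih t /\
     cont_within_ge (-tau) Sv t /\ cont_within_ge (-tau) Iv t) /\
  (forall t, 0 < t ->
     is_derive Sh t
       (beta_h - C_vh * (Iv t / (Sv t + Iv t)) * Sh t - mu_h * Sh t) /\
     is_derive Ih t
       (C_vh * (Iv (t - tau) / (Sv (t - tau) + Iv (t - tau))) * Sh (t - tau)
        - mu_h * Ih t) /\
     is_derive Sv t (beta_v - C_hv * Ih t * Sv t - mu_v * Sv t) /\
     is_derive Iv t (C_hv * Ih t * Sv t - mu_v * Iv t)).

(* limsup_{t -> +oo} u(t) > 0, written out: there is eps > 0 such that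
   u(t) > eps for arbitrarily large t. *)
Definition limsup_pos (u : R -> R) : Prop :=
  exists eps, 0 < eps /\ forall T, exists t, T <= t /\ eps < u t.

Definition weakly_persistent_in_D (beta_h beta_v mu_h mu_v C_vh C_hv tau : R)
  : Prop :=
  forall Sh Ih Sv Iv : R -> R,
    history_in_D tau Sh Ih Sv Iv ->
    is_solution beta_h beta_v mu_h mu_v C_vh C_hv tau Sh Ih Sv Iv ->
    limsup_pos Sh /\ limsup_pos Ih /\ limsup_pos Sv /\ limsup_pos Iv.

Definition basic_R0 (beta_h mu_h mu_v C_vh C_hv : R) : R :=
  sqrt (C_vh * C_hv * beta_h / (mu_h ^ 2 * mu_v)).

(* Main.v *)
Require Import Defs.
From Stdlib Require Import Reals Lra Classical.
From Coquelicot Require Import Coquelicot.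
Open Scope R_scope.

Definition rcF (f : R -> R) (a : R) : Prop :=
  filterlim f (within (fun s => a <= s) (locally a)) (locally (f a)).

Lemma rc_eps f a : rcF f a -> forall eps, 0 < eps ->
  exists d, 0 < d /\ forall x, a <= x -> Rabs (x - a) < d -> Rabs (f x - f a) < eps.
Proof.
  intros H eps He.
  destruct (proj1 (filterlim_locally f (f a)) H (mkposreal eps He)) as [d Hd].
  exists d; split; [apply cond_pos|].
  intros x Hx Hxa. apply (Hd x). exact Hxa. exact Hx.
Qed.

Lemma rc_of_cw b f a : b <= a -> cont_within_ge b f a -> rcF f a.
Proof.
  intros Hba H. unfold rcF, cont_within_ge in *.
  intros P HP. specialize (H P HP). unfold within in *.
  destruct H as [d Hd]. exists d. intros y Hy Hay. apply Hd; auto. lra.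
Qed.

Lemma rc_of_cont f a : continuous f a -> rcF f a.
Proof.
  intros H P HP. specialize (H P HP). destruct H as [d Hd]. exists d.
  intros y Hy _. apply Hd; auto.
Qed.

Lemma rc_of_derive f a l : is_derive f a l -> rcF f a.
Proof. intros H. apply rc_of_cont.
  apply (ex_derive_continuous (K:=R_AbsRing) (V:=R_NormedModule)). exists l; exact H. Qed.

Lemma rc_mult f g a : rcF f a -> rcF g a -> rcF (fun t => f t * g t) a.
Proof.
  intros Hf Hg. unfold rcF.
  apply (filterlim_comp_2 f g Rmult Hf Hg).
  apply (filterlim_mult (K:=R_AbsRing)).
Qed.

Lemma rc_plus f g a : rcF f a -> rcF g a -> rcF (fun t => f t + g t) a.
Proof.
  intros Hf Hg. unfold rcF.
  apply (filterlim_comp_2 f g Rplus Hf Hg).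
  apply (filterlim_plus (K:=R_AbsRing) (V:=R_NormedModule)).
Qed.

Lemma rc_const c a : rcF (fun _ => c) a.
Proof. unfold rcF. apply filterlim_const. Qed.

Lemma cpt_of_derive (f : R -> R) t l : is_derive f t l -> continuity_pt f t.
Proof. intros H. apply continuity_pt_filterlim.
  apply (ex_derive_continuous (K:=R_AbsRing) (V:=R_NormedModule)). exists l; exact H. Qed.

Lemma mono f df a b : a <= b -> rcF f a ->
  (forall t, a < t <= b -> is_derive f t (df t)) ->
  (forall t, a < t <= b -> 0 <= df t) -> f a <= f b.
Proof.
  intros Hab Hrc Hd Hpos.
  destruct (Req_dec a b) as [<-|Hne]; [lra|].
  destruct (Rle_or_lt (f a) (f b)) as [|Hlt]; [auto|exfalso].
  destruct (rc_eps f a Hrc (f a - f b)) as [d [Hd0 Hdd]]; [lra|].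
  set (x := a + Rmin d (b - a) / 2).
  assert (Hm1 : Rmin d (b-a) <= d) by apply Rmin_l.
  assert (Hm2 : Rmin d (b-a) <= b - a) by apply Rmin_r.
  assert (Hm3 : 0 < Rmin d (b-a)) by (apply Rmin_glb_lt; lra).
  assert (Hx : Rabs (f x - f a) < f a - f b).
  { apply Hdd; unfold x. lra. rewrite Rabs_right; lra. }
  destruct (MVT_gen f x b df) as [c [Hc Heq]].
  - intros y Hy. rewrite Rmin_left in Hy by (unfold x; lra).
    rewrite Rmax_right in Hy by (unfold x; lra). apply Hd. unfold x in *; lra.
  - intros y Hy. rewrite Rmin_left in Hy by (unfold x; lra).
    rewrite Rmax_right in Hy by (unfold x; lra). apply (cpt_of_derive f y (df y)).
    apply Hd. unfold x in *; lra.
  - rewrite Rmin_left in Hc by (unfold x; lra).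
    rewrite Rmax_right in Hc by (unfold x; lra).
    assert (0 <= df c) by (apply Hpos; unfold x in *; lra).
    assert (0 <= df c * (b - x)) by (apply Rmult_le_pos; unfold x in *; lra).
    apply Rabs_def2 in Hx. lra.
Qed.

Lemma mono2 f df a b x y : a <= x -> x <= y -> y <= b -> rcF f a ->
  (forall t, a < t <= b -> is_derive f t (df t)) ->
  (forall t, a < t <= b -> 0 <= df t) -> f x <= f y.
Proof.
  intros H1 H2 H3 Hrc Hd Hp.
  destruct (Req_dec a x) as [<-|Hne].
  - apply (mono f df a y); auto; intros; [apply Hd|apply Hp]; lra.
  - apply (mono f df x y); auto.
    + apply (rc_of_derive f x (df x)). apply Hd; lra.
    + intros; apply Hd; lra.
    + intros; apply Hp; lra.
Qed.

Lemma d_exp m T t : is_derive (fun t => exp (m * (t - T))) t (m * exp (m * (t - T))).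
Proof. auto_derive; [auto | rewrite Rmult_1_r; reflexivity]. Qed.

Lemma rc_expf f K m T a : rcF f a -> rcF (fun t => (f t - K) * exp (m * (t - T))) a.
Proof.
  intros H. apply rc_mult.
  - apply rc_plus; [exact H | apply rc_const].
  - apply (rc_of_derive _ a _ (d_exp m T a)).
Qed.

Lemma d_expf (f : R -> R) (df : R) K m T t : is_derive f t df ->
  is_derive (fun t => (f t - K) * exp (m * (t - T))) t
    ((df + m * (f t - K)) * exp (m * (t - T))).
Proof.
  intros H.
  assert (H0 := is_derive_mult (K:=R_AbsRing) (fun t => f t - K) (fun t => exp (m * (t - T))) t _ _
     (is_derive_minus (K:=R_AbsRing) f (fun _ => K) t _ _ H (is_derive_const K t)) (d_exp m T t)
     (fun a b => Rmult_comm a b)).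
  simpl in H0.
  match goal with |- is_derive _ _ ?v => replace v with (plus (mult (minus df 0) (exp (m * (t - T)))) (mult (f t - K) (m * exp (m * (t - T))))) end.
  exact H0.
  unfold plus, mult, minus, opp, zero; simpl; unfold plus, opp; simpl; ring.
Qed.

Lemma rc_opp f a : rcF f a -> rcF (fun t => - f t) a.
Proof. intros H. unfold rcF. eapply filterlim_comp; [exact H|].
  apply (filterlim_opp (K:=R_AbsRing) (V:=R_NormedModule)). Qed.

Lemma mono_dec f df a b : a <= b -> rcF f a ->
  (forall t, a < t <= b -> is_derive f t (df t)) ->
  (forall t, a < t <= b -> df t <= 0) -> f b <= f a.
Proof.
  intros Hab Hrc Hd Hn.
  assert (- f a <= - f b); [|lra].
  apply (mono (fun t => - f t) (fun t => - df t) a b Hab (rc_opp f a Hrc)).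
  - intros t Ht. apply (is_derive_opp (K:=R_AbsRing) (V:=R_NormedModule)). apply Hd; auto.
  - intros t Ht. specialize (Hn t Ht). lra.
Qed.

Lemma exp_shift m x : exp (m * x) * exp (- (m * x)) = 1.
Proof. rewrite <- exp_plus. replace (m*x + - (m*x)) with 0 by ring. apply exp_0. Qed.

Lemma cmp_up f df A m T b : 0 < m -> T <= b -> rcF f T ->
  (forall t, T < t <= b -> is_derive f t (df t)) ->
  (forall t, T < t <= b -> df t <= A - m * f t) ->
  f b <= A / m + (f T - A / m) * exp (- (m * (b - T))).
Proof.
  intros Hm Hb Hrc Hd Hle.
  set (K := A / m).
  assert (H := mono_dec (fun t => (f t - K) * exp (m * (t - T)))
     (fun t => (df t + m * (f t - K)) * exp (m * (t - T))) T b Hb (rc_expf f K m T T Hrc)).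
  simpl in H.
  assert (H1 : (f b - K) * exp (m * (b - T)) <= (f T - K) * exp (m * (T - T))).
  { apply H.
    - intros t Ht. apply d_expf. apply Hd; auto.
    - intros t Ht. specialize (Hle t Ht).
      assert (0 < exp (m * (t - T))) by apply exp_pos.
      assert (df t + m * (f t - K) <= 0).
      { unfold K. replace (m * (f t - A/m)) with (m * f t - A) by (field; lra). lra. }
      nra. }
  replace (T - T) with 0 in H1 by ring. rewrite Rmult_0_r, exp_0, Rmult_1_r in H1.
  assert (He := exp_shift m (b - T)).
  assert (0 < exp (- (m * (b - T)))) by apply exp_pos.
  assert ((f b - K) * exp (m * (b - T)) * exp (- (m * (b - T))) <=
          (f T - K) * exp (- (m * (b - T)))) by (apply Rmult_le_compat_r; lra).
  rewrite Rmult_assoc, He, Rmult_1_r in H2. fold K. lra.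
Qed.

Lemma cmp_lo f df A m T b : 0 < m -> T <= b -> rcF f T ->
  (forall t, T < t <= b -> is_derive f t (df t)) ->
  (forall t, T < t <= b -> A - m * f t <= df t) ->
  A / m + (f T - A / m) * exp (- (m * (b - T))) <= f b.
Proof.
  intros Hm Hb Hrc Hd Hle.
  set (K := A / m).
  assert (H := mono (fun t => (f t - K) * exp (m * (t - T)))
     (fun t => (df t + m * (f t - K)) * exp (m * (t - T))) T b Hb (rc_expf f K m T T Hrc)).
  simpl in H.
  assert (H1 : (f T - K) * exp (m * (T - T)) <= (f b - K) * exp (m * (b - T))).
  { apply H.
    - intros t Ht. apply d_expf. apply Hd; auto.
    - intros t Ht. specialize (Hle t Ht).
      assert (0 < exp (m * (t - T))) by apply exp_pos.
      assert (0 <= df t + m * (f t - K)).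
      { unfold K. replace (m * (f t - A/m)) with (m * f t - A) by (field; lra). lra. }
      nra. }
  replace (T - T) with 0 in H1 by ring. rewrite Rmult_0_r, exp_0, Rmult_1_r in H1.
  assert (He := exp_shift m (b - T)).
  assert (0 < exp (- (m * (b - T)))) by apply exp_pos.
  assert ((f T - K) * exp (- (m * (b - T))) <=
          (f b - K) * exp (m * (b - T)) * exp (- (m * (b - T)))) by (apply Rmult_le_compat_r; lra).
  rewrite Rmult_assoc, He, Rmult_1_r in H2. fold K. lra.
Qed.

Lemma exp_neg_le1 y : 0 <= y -> 0 < exp (- y) <= 1.
Proof.
  intros Hy. rewrite exp_Ropp. assert (H := exp_ineq1_le y).
  assert (0 < exp y) by apply exp_pos. split.
  apply Rinv_0_lt_compat; lra.
  rewrite <- Rinv_1. apply Rinv_le_contravar; lra.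
Qed.

Lemma decay m C d : 0 < m -> 0 < d ->
  exists X, 0 <= X /\ forall x, X <= x -> C * exp (- (m * x)) <= d.
Proof.
  intros Hm Hd. exists (Rabs C / (m * d)). split.
  { apply Rmult_le_pos. apply Rabs_pos. left; apply Rinv_0_lt_compat; nra. }
  intros x Hx. rewrite exp_Ropp.
  assert (H := exp_ineq1_le (m * x)).
  assert (HC : C <= Rabs C) by apply Rle_abs.
  assert (0 <= Rabs C) by apply Rabs_pos.
  assert (Hmx : Rabs C / d <= m * x).
  { apply (Rmult_le_compat_l m) in Hx; [|lra].
    replace (m * (Rabs C / (m * d))) with (Rabs C / d) in Hx by (field; lra). lra. }
  assert (Rabs C <= d * (m * x)).
  { apply (Rmult_le_compat_l d) in Hmx; [|lra].
    replace (d * (Rabs C / d)) with (Rabs C) in Hmx by (field; lra). lra. }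
  assert (0 < exp (m * x)) by apply exp_pos.
  apply (Rmult_le_reg_r (exp (m * x))); auto.
  rewrite Rmult_assoc, Rinv_l by lra. nra.
Qed.

Lemma cmp_up_all f df A m T : 0 < m -> rcF f T ->
  (forall t, T < t -> is_derive f t (df t)) ->
  (forall t, T < t -> df t <= A - m * f t) ->
  (forall b, T <= b -> f b <= Rmax (f T) (A / m)) /\
  (forall d, 0 < d -> exists X, T <= X /\ forall b, X <= b -> f b <= A / m + d).
Proof.
  intros Hm Hrc Hd Hle.
  assert (Hc : forall b, T <= b -> f b <= A / m + (f T - A / m) * exp (- (m * (b - T)))).
  { intros b Hb. apply (cmp_up f df); auto; intros; [apply Hd|apply Hle]; lra. }
  split.
  - intros b Hb. specialize (Hc b Hb).
    assert (He := exp_neg_le1 (m * (b - T)) ltac:(nra)).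
    assert (Rmax_l' := Rmax_l (f T) (A/m)). assert (Rmax_r' := Rmax_r (f T) (A/m)).
    destruct (Rle_or_lt 0 (f T - A/m)); nra.
  - intros d Hd0. destruct (decay m (f T - A / m) d Hm Hd0) as [X [HX0 HX]].
    exists (T + X). split. lra. intros b Hb. specialize (Hc b ltac:(lra)).
    specialize (HX (b - T) ltac:(lra)). lra.
Qed.

Lemma cmp_lo_all f df A m T : 0 < m -> rcF f T ->
  (forall t, T < t -> is_derive f t (df t)) ->
  (forall t, T < t -> A - m * f t <= df t) ->
  (forall b, T <= b -> Rmin (f T) (A / m) <= f b) /\
  (forall d, 0 < d -> exists X, T <= X /\ forall b, X <= b -> A / m - d <= f b).
Proof.
  intros Hm Hrc Hd Hle.
  assert (Hc : forall b, T <= b -> A / m + (f T - A / m) * exp (- (m * (b - T))) <= f b).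
  { intros b Hb. apply (cmp_lo f df); auto; intros; [apply Hd|apply Hle]; lra. }
  split.
  - intros b Hb. specialize (Hc b Hb).
    assert (He := exp_neg_le1 (m * (b - T)) ltac:(nra)).
    assert (Rmin_l' := Rmin_l (f T) (A/m)). assert (Rmin_r' := Rmin_r (f T) (A/m)).
    destruct (Rle_or_lt 0 (f T - A/m)); nra.
  - intros d Hd0. destruct (decay m (- (f T - A / m)) d Hm Hd0) as [X [HX0 HX]].
    exists (T + X). split. lra. intros b Hb. specialize (Hc b ltac:(lra)).
    specialize (HX (b - T) ltac:(lra)). lra.
Qed.

Lemma cont_eps f t : continuity_pt f t -> forall eps, 0 < eps ->
  exists d, 0 < d /\ forall x, Rabs (x - t) < d -> Rabs (f x - f t) < eps.
Proof.
  intros H eps He. apply continuity_pt_filterlim in H.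
  destruct (proj1 (filterlim_locally f (f t)) H (mkposreal eps He)) as [d Hd].
  exists d; split; [apply cond_pos|]. intros x Hx. apply (Hd x). exact Hx.
Qed.

Lemma lub_approx (E : R -> Prop) s : is_lub E s -> forall d, 0 < d -> exists x, E x /\ s - d < x.
Proof.
  intros [Hub Hl] d Hd. apply NNPP. intros Hn.
  assert (is_upper_bound E (s - d)).
  { intros x Hx. destruct (Rle_or_lt x (s - d)); auto. exfalso; apply Hn; eauto. }
  specialize (Hl _ H). lra.
Qed.

Lemma barrier f df a b : a <= b -> rcF f a ->
  (forall t, a < t <= b -> is_derive f t (df t)) ->
  0 <= f a ->
  (forall t, a < t <= b -> f t <= 0 -> 0 < df t) ->
  forall t, a <= t <= b -> 0 <= f t.
Proof.
  intros Hab Hrc Hd Ha Hdf t0 Ht0.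
  destruct (Rle_or_lt 0 (f t0)) as [|Hneg]; auto. exfalso.
  assert (Ht0a : a < t0) by (destruct (Req_dec a t0); subst; lra).
  set (E := fun x => a <= x <= t0 /\ 0 <= f x).
  assert (HB : bound E) by (exists t0; intros x [Hx _]; lra).
  assert (HE : exists x, E x) by (exists a; split; lra).
  destruct (completeness E HB HE) as [s Hs].
  assert (Has : a <= s) by (apply (proj1 Hs); split; lra).
  assert (Hst : s <= t0) by (apply (proj2 Hs); intros x [Hx _]; lra).
  assert (Hfs : 0 <= f s).
  { destruct (Rle_or_lt 0 (f s)) as [|Hl]; auto. exfalso.
    destruct (Req_dec a s) as [<-|Hne]; [lra|].
    destruct (cont_eps f s (cpt_of_derive f s (df s) (Hd s ltac:(lra))) (- f s)) as [d [Hd0 Hdd]]; [lra|].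
    destruct (lub_approx E s Hs d Hd0) as [x [[Hx1 Hx2] Hx3]].
    assert (x <= s) by (apply (proj1 Hs); split; auto).
    assert (Rabs (f x - f s) < - f s) by (apply Hdd; rewrite Rabs_left1; lra).
    apply Rabs_def2 in H0. lra. }
  assert (Hst' : s < t0) by (destruct (Req_dec s t0); subst; lra).
  assert (Hneg' : forall x, s < x <= t0 -> f x < 0).
  { intros x Hx. destruct (Rle_or_lt 0 (f x)) as [Hp|]; auto.
    assert (x <= s) by (apply (proj1 Hs); split; [lra|auto]). lra. }
  assert (Hrcs : rcF f s).
  { destruct (Req_dec a s) as [<-|Hne]; auto. apply (rc_of_derive f s (df s)). apply Hd; lra. }
  assert (f s <= f t0).
  { apply (mono f df s t0); auto. intros; apply Hd; lra.
    intros t Ht. left. apply Hdf. lra. left. apply Hneg'; lra. }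
  lra.
Qed.

Lemma first_zero f df a b : a <= b -> rcF f a ->
  (forall t, a < t <= b -> is_derive f t (df t)) ->
  0 < f a -> f b <= 0 ->
  exists c, a < c <= b /\ f c = 0 /\ forall t, a <= t < c -> 0 < f t.
Proof.
  intros Hab Hrc Hd Ha Hb.
  set (E := fun x => a <= x <= b /\ forall t, a <= t <= x -> 0 < f t).
  assert (HB : bound E) by (exists b; intros x [Hx _]; lra).
  assert (HE : exists x, E x) by (exists a; split; [lra| intros t Ht; replace t with a by lra; auto]).
  destruct (completeness E HB HE) as [c Hc].
  assert (Hcb : c <= b) by (apply (proj2 Hc); intros x [Hx _]; lra).
  assert (Hbelow : forall t, a <= t < c -> 0 < f t).
  { intros t Ht. destruct (lub_approx E c Hc (c - t)) as [x [[Hx1 Hx2] Hx3]]; [lra|].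
    apply Hx2; lra. }
  assert (Hac : a < c).
  { destruct (rc_eps f a Hrc (f a) Ha) as [d [Hd0 Hdd]].
    assert (Hab' : a < b) by (destruct (Req_dec a b); subst; lra).
    set (x := a + Rmin d (b - a) / 2).
    assert (Hm1 : Rmin d (b-a) <= d) by apply Rmin_l.
    assert (Hm2 : Rmin d (b-a) <= b - a) by apply Rmin_r.
    assert (Hm3 : 0 < Rmin d (b-a)) by (apply Rmin_glb_lt; lra).
    assert (E x).
    { split. unfold x; lra. intros t Ht.
      assert (Rabs (f t - f a) < f a) by (apply Hdd; [lra| rewrite Rabs_right; unfold x in *; lra]).
      apply Rabs_def2 in H. lra. }
    assert (x <= c) by (apply (proj1 Hc); auto). unfold x in *; lra. }
  assert (Hcc : continuity_pt f c) by (apply (cpt_of_derive f c (df c)); apply Hd; lra).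
  exists c. split; [lra|]. split; [|exact Hbelow].
  destruct (Rtotal_order (f c) 0) as [Hl|[He|Hg]]; auto; exfalso.
  - destruct (cont_eps f c Hcc (- f c)) as [d [Hd0 Hdd]]; [lra|].
    set (t := Rmax a (c - d / 2)).
    assert (Ht1 : a <= t) by apply Rmax_l. assert (Ht2 : c - d/2 <= t) by apply Rmax_r.
    assert (Ht3 : t < c) by (unfold t; apply Rmax_lub_lt; lra).
    assert (Rabs (f t - f c) < - f c) by (apply Hdd; rewrite Rabs_left1; lra).
    apply Rabs_def2 in H. specialize (Hbelow t ltac:(lra)). lra.
  - destruct (Req_dec c b) as [->|Hne]; [lra|].
    destruct (cont_eps f c Hcc (f c)) as [d [Hd0 Hdd]]; [lra|].
    set (x := c + Rmin d (b - c) / 2).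
    assert (Hm1 : Rmin d (b-c) <= d) by apply Rmin_l.
    assert (Hm2 : Rmin d (b-c) <= b - c) by apply Rmin_r.
    assert (Hm3 : 0 < Rmin d (b-c)) by (apply Rmin_glb_lt; lra).
    assert (E x).
    { split. unfold x; lra. intros t Ht.
      destruct (Rlt_or_le t c). apply Hbelow; lra.
      assert (Rabs (f t - f c) < f c) by (apply Hdd; rewrite Rabs_right; unfold x in *; lra).
      apply Rabs_def2 in H0. lra. }
    assert (x <= c) by (apply (proj1 Hc); auto). unfold x in *; lra.
Qed.

Lemma lim_lo f df A m K : 0 < A -> 0 < m -> 0 <= K ->
  (forall t, 0 < t -> is_derive f t (df t)) ->
  (forall e, 0 < e -> exists T, 0 < T /\ forall t, T < t -> A - (m + K * e) * f t <= df t) ->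
  forall r, 0 < r < 1 -> exists X, forall t, X <= t -> r * (A / m) <= f t.
Proof.
  intros HA Hm HK Hd Hev r Hr.
  set (e := (1 - r) * m / (2 * (K + 1))).
  assert (He : 0 < e) by (unfold e; apply Rdiv_lt_0_compat; nra).
  destruct (Hev e He) as [T [HT HTt]].
  set (m' := m + K * e).
  assert (HKe : K * e <= (1 - r) * m / 2).
  { unfold e. replace (K * ((1 - r) * m / (2 * (K + 1)))) with ((1-r)*m/2 * (K / (K+1))) by (field; lra).
    assert (K / (K+1) <= 1). { apply (Rmult_le_reg_r (K+1)); [lra|]. unfold Rdiv. rewrite Rmult_assoc, Rinv_l; lra. }
    assert (0 <= (1-r)*m/2) by (apply Rmult_le_pos; [nra|lra]). nra. }
  assert (HKe0 : 0 <= K * e) by nra.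
  assert (Hm' : 0 < m') by (unfold m'; lra).
  destruct (cmp_lo_all f df A m' T Hm' (rc_of_derive f T (df T) (Hd T HT))
    (fun t Ht => Hd t ltac:(lra)) HTt) as [_ Hlo].
  set (w := A / m). set (u := A / m').
  assert (Hw : A = w * m) by (unfold w; field; lra).
  assert (Hu : A = u * m') by (unfold u; field; lra).
  assert (Hw0 : 0 < w) by (unfold w; apply Rdiv_lt_0_compat; lra).
  assert (Hu0 : 0 < u) by (unfold u; apply Rdiv_lt_0_compat; lra).
  destruct (Hlo ((1 - r) * w / 2)) as [X [HX HXb]]; [nra|].
  exists X. intros t Ht. specialize (HXb t Ht). fold u in HXb.
  assert (Hm'le : (1 + r) * m' <= 2 * m) by (unfold m'; nra).
  assert ((1 + r) * w * m <= 2 * u * m) by nra.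
  assert ((1 + r) * w <= 2 * u) by (apply (Rmult_le_reg_r m); lra).
  lra.
Qed.

Lemma lim_up f df m K : 0 < m -> 0 <= K ->
  (forall t, 0 < t -> is_derive f t (df t)) ->
  (forall e, 0 < e -> exists T, 0 < T /\ forall t, T < t -> df t <= K * e - m * f t) ->
  forall d, 0 < d -> exists X, forall t, X <= t -> f t <= d.
Proof.
  intros Hm HK Hd Hev d Hd0.
  set (e := m * d / (2 * (K + 1))).
  assert (He : 0 < e) by (unfold e; apply Rdiv_lt_0_compat; nra).
  destruct (Hev e He) as [T [HT HTt]].
  destruct (cmp_up_all f df (K * e) m T Hm (rc_of_derive f T (df T) (Hd T HT))
    (fun t Ht => Hd t ltac:(lra)) HTt) as [_ Hup].
  destruct (Hup (d / 2)) as [X [HX HXb]]; [lra|].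
  exists X. intros t Ht. specialize (HXb t Ht).
  assert (K * e / m <= d / 2).
  { unfold e. replace (K * (m * d / (2 * (K + 1))) / m) with (d / 2 * (K / (K+1))) by (field; lra).
    assert (K / (K+1) <= 1). { apply (Rmult_le_reg_r (K+1)); [lra|]. unfold Rdiv. rewrite Rmult_assoc, Rinv_l; lra. }
    nra. }
  lra.
Qed.

Lemma div_bound x e c N : 0 <= x <= e -> 0 < c <= N -> x / N <= e / c.
Proof.
  intros Hx Hc. unfold Rdiv. apply Rmult_le_compat; try lra.
  left; apply Rinv_0_lt_compat; lra. apply Rinv_le_contravar; lra.
Qed.

Lemma lsp_of_lower u : (exists c X, 0 < c /\ forall t, X <= t -> c <= u t) -> limsup_pos u.
Proof.
  intros [c [X [Hc HX]]]. exists (c / 2). split; [lra|].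
  intros T. exists (Rmax T X). split. apply Rmax_l. assert (H := HX (Rmax T X) (Rmax_r _ _)). lra.
Qed.

Lemma not_lsp u : ~ limsup_pos u -> forall e, 0 < e -> exists T, forall t, T <= t -> u t <= e.
Proof.
  intros Hn e He. apply NNPP. intros H1. apply Hn. exists e. split; auto.
  intros T. apply NNPP. intros H2. apply H1. exists T. intros t Ht.
  destruct (Rle_or_lt (u t) e); auto. exfalso. apply H2. exists t. split; auto.
Qed.

Section Model.
Variables bh bv mh mv Cvh Chv tau : R.
Hypotheses (Hbh: 0<bh) (Hbv : 0<bv) (Hmh: 0<mh) (Hmv : 0<mv) (HCvh : 0<Cvh) (HChv: 0<Chv) (Htau: 0<=tau).
Variables Sh Ih Sv Iv : R -> R.
Hypothesis Hhist : history_in_D tau Sh Ih Sv Iv.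
Hypothesis Hsol : is_solution bh bv mh mv Cvh Chv tau Sh Ih Sv Iv.

Definition q s := Iv s / (Sv s + Iv s).
Definition g s := q s * Sh s.

Definition dSh t := bh - Cvh * (Iv t / (Sv t + Iv t)) * Sh t - mh * Sh t.
Definition dIh t := Cvh * (Iv (t - tau) / (Sv (t - tau) + Iv (t - tau))) * Sh (t - tau) - mh * Ih t.
Definition dSv t := bv - Chv * Ih t * Sv t - mv * Sv t.
Definition dIv t := Chv * Ih t * Sv t - mv * Iv t.

Lemma DSh t : 0 < t -> is_derive Sh t (dSh t).
Proof. intros; apply (proj2 Hsol t H). Qed.
Lemma DIh t : 0 < t -> is_derive Ih t (dIh t).
Proof. intros; apply (proj2 Hsol t H). Qed.
Lemma DSv t : 0 < t -> is_derive Sv t (dSv t).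
Proof. intros; apply (proj2 Hsol t H). Qed.
Lemma DIv t : 0 < t -> is_derive Iv t (dIv t).
Proof. intros; apply (proj2 Hsol t H). Qed.

Lemma RSh t : 0 <= t -> rcF Sh t.
Proof. intros; apply (rc_of_cw (-tau)); [lra|]. apply (proj1 Hsol t); lra. Qed.
Lemma RIh t : 0 <= t -> rcF Ih t.
Proof. intros; apply (rc_of_cw (-tau)); [lra|]. apply (proj1 Hsol t); lra. Qed.
Lemma RSv t : 0 <= t -> rcF Sv t.
Proof. intros; apply (rc_of_cw (-tau)); [lra|]. apply (proj1 Hsol t); lra. Qed.
Lemma RIv t : 0 <= t -> rcF Iv t.
Proof. intros; apply (rc_of_cw (-tau)); [lra|]. apply (proj1 Hsol t); lra. Qed.

Definition Nv t := Sv t + Iv t.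
Lemma DNv t : 0 < t -> is_derive Nv t (bv - mv * Nv t).
Proof.
  intros Ht. assert (H := is_derive_plus (K:=R_AbsRing) (V:=R_NormedModule) Sv Iv t _ _ (DSv t Ht) (DIv t Ht)).
  unfold Nv. match goal with |- is_derive _ _ ?v => replace v with (plus (dSv t) (dIv t)) end.
  exact H. unfold plus; simpl; unfold dSv, dIv; ring.
Qed.
Lemma RNv : rcF Nv 0.
Proof. apply rc_plus; [apply RSv|apply RIv]; lra. Qed.

Definition cN := Rmin (Nv 0) (bv / mv).
Definition MN := Rmax (Nv 0) (bv / mv).

Lemma Nv0 : 0 < Nv 0.
Proof. destruct Hhist as [Hh0 _]. apply (Hh0 0); lra. Qed.

Lemma cN_pos : 0 < cN.
Proof. unfold cN. apply Rmin_glb_lt. apply Nv0. apply Rdiv_lt_0_compat; lra. Qed.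

Lemma Nv_bounds : (forall t, 0 <= t -> cN <= Nv t /\ Nv t <= MN) /\
  (forall d, 0 < d -> exists X, forall t, X <= t -> Nv t <= bv / mv + d).
Proof.
  destruct (cmp_up_all Nv (fun t => bv - mv * Nv t) bv mv 0 Hmv RNv DNv (fun t _ => Rle_refl _)) as [U1 U2].
  destruct (cmp_lo_all Nv (fun t => bv - mv * Nv t) bv mv 0 Hmv RNv DNv (fun t _ => Rle_refl _)) as [L1 L2].
  split. intros; split; [apply L1|apply U1]; auto.
  intros d Hd. destruct (U2 d Hd) as [X [_ HX]]. eauto.
Qed.

Lemma Nv_pos s : -tau <= s -> 0 < Nv s.
Proof.
  intros Hs. destruct (Rle_or_lt s 0).
  - destruct Hhist as [Hh0 _]. apply (Hh0 s); lra.
  - assert (H1 := proj1 (proj1 Nv_bounds s ltac:(lra))). assert (H2 := cN_pos). lra.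
Qed.

Lemma chain b : 0 <= b -> (forall t, 0 <= t <= b -> 0 <= Ih t) ->
  forall t, 0 <= t <= b -> 0 <= Sv t /\ 0 <= Iv t /\ 0 <= Sh t.
Proof.
  intros Hb HI.
  destruct Hhist as [Hh _].
  assert (HSv : forall t, 0 <= t <= b -> 0 <= Sv t).
  { apply (barrier Sv dSv 0 b Hb (RSv 0 (Rle_refl 0))).
    - intros; apply DSv; lra.
    - apply (Hh 0); lra.
    - intros t Ht Hs. unfold dSv. assert (0 <= Ih t) by (apply HI; lra).
      assert (Chv * Ih t * Sv t <= 0). { assert (0 <= Chv * Ih t) by nra. nra. }
      nra. }
  assert (HIv : forall t, 0 <= t <= b -> 0 <= Iv t).
  { intros t Ht.
    assert (H := mono (fun t => (Iv t - 0) * exp (mv * (t - 0)))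
      (fun t => (dIv t + mv * (Iv t - 0)) * exp (mv * (t - 0))) 0 t (proj1 Ht)
      (rc_expf Iv 0 mv 0 0 (RIv 0 (Rle_refl 0)))).
    simpl in H.
    assert (He : 0 < exp (mv * (t - 0))) by apply exp_pos.
    assert (0 <= (Iv t - 0) * exp (mv * (t - 0))); [|nra].
    eapply Rle_trans; [|apply H].
    - replace (0 - 0) with 0 by ring. rewrite Rmult_0_r, exp_0. assert (0 <= Iv 0) by (apply (Hh 0); lra). lra.
    - intros s Hs. apply d_expf, DIv. lra.
    - intros s Hs. unfold dIv. assert (0 <= Ih s) by (apply HI; lra). assert (0 <= Sv s) by (apply HSv; lra).
      assert (0 < exp (mv * (s - 0))) by apply exp_pos.
      replace (Chv * Ih s * Sv s - mv * Iv s + mv * (Iv s - 0)) with (Chv * Ih s * Sv s) by ring.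
      apply Rmult_le_pos; [|lra]. apply Rmult_le_pos; [|lra]. nra. }
  assert (HSh : forall t, 0 <= t <= b -> 0 <= Sh t).
  { apply (barrier Sh dSh 0 b Hb (RSh 0 (Rle_refl 0))).
    - intros; apply DSh; lra.
    - apply (Hh 0); lra.
    - intros t Ht Hs. unfold dSh.
      assert (0 <= Iv t / (Sv t + Iv t)).
      { apply Rdiv_le_0_compat. apply HIv; lra. apply (Nv_pos t); lra. }
      assert (Cvh * (Iv t / (Sv t + Iv t)) * Sh t <= 0). { assert (0 <= Cvh * (Iv t / (Sv t + Iv t))) by nra. nra. }
      nra. }
  intros t Ht; auto.
Qed.

Lemma hist_or_chain b : 0 <= b -> (forall t, 0 <= t <= b -> 0 <= Ih t) ->
  forall s, -tau <= s <= b -> 0 <= Sv s /\ 0 <= Iv s /\ 0 <= Sh s.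
Proof.
  intros Hb HI s Hs. destruct (Rle_or_lt s 0).
  - destruct Hhist as [Hh _]. destruct (Hh s) as [A1 [A2 [A3 [A4 A5]]]]; [lra|]. auto.
  - apply (chain b); auto; lra.
Qed.

Lemma Ih_at b : 0 <= b -> (forall t, 0 <= t <= b -> 0 <= Ih t) -> 0 < Ih b.
Proof.
  intros Hb HI.
  assert (H := mono (fun t => (Ih t - 0) * exp (mh * (t - 0)))
      (fun t => (dIh t + mh * (Ih t - 0)) * exp (mh * (t - 0))) 0 b Hb
      (rc_expf Ih 0 mh 0 0 (RIh 0 (Rle_refl 0)))).
  simpl in H.
  assert (He : 0 < exp (mh * (b - 0))) by apply exp_pos.
  assert (0 < (Ih b - 0) * exp (mh * (b - 0))); [|nra].
  eapply Rlt_le_trans; [|apply H].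
  - replace (0 - 0) with 0 by ring. rewrite Rmult_0_r, exp_0. destruct Hhist as [_ H0]. lra.
  - intros s Hs. apply d_expf, DIh. lra.
  - intros s Hs. unfold dIh.
    destruct (hist_or_chain b Hb HI (s - tau)) as [A1 [A2 A3]]; [lra|].
    assert (0 < exp (mh * (s - 0))) by apply exp_pos.
    replace (Cvh * (Iv (s - tau) / (Sv (s - tau) + Iv (s - tau))) * Sh (s - tau) - mh * Ih s + mh * (Ih s - 0))
      with (Cvh * (Iv (s - tau) / (Sv (s - tau) + Iv (s - tau))) * Sh (s - tau)) by ring.
    assert (0 <= Iv (s - tau) / (Sv (s - tau) + Iv (s - tau))).
    { apply Rdiv_le_0_compat; auto. apply (Nv_pos (s - tau)); lra. }
    apply Rmult_le_pos; [|lra]. apply Rmult_le_pos; [|lra]. nra.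
Qed.

Lemma Ih_pos t : 0 <= t -> 0 < Ih t.
Proof.
  intros Ht. destruct (Rle_or_lt (Ih t) 0) as [Hn|]; auto. exfalso.
  destruct Hhist as [_ H0].
  destruct (first_zero Ih dIh 0 t Ht (RIh 0 (Rle_refl 0)) (fun s Hs => DIh s ltac:(lra)) H0 Hn)
    as [c [Hc [Hc0 Hcb]]].
  assert (0 < Ih c); [|lra].
  apply Ih_at; [lra|]. intros s Hs. destruct (Req_dec s c) as [->|]; [lra|]. left; apply Hcb; lra.
Qed.

Lemma all_pos s : -tau <= s -> 0 <= Sv s /\ 0 <= Iv s /\ 0 <= Sh s.
Proof.
  intros Hs. apply (hist_or_chain (Rmax s 0)). apply Rmax_r.
  intros; left; apply Ih_pos; lra. split; [lra|apply Rmax_l].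
Qed.


Lemma q_bounds t : 0 <= t -> 0 <= Iv t / (Sv t + Iv t) <= 1.
Proof.
  intros Ht. destruct (all_pos t) as [A1 [A2 A3]]; [lra|].
  assert (HN := Nv_pos t ltac:(lra)). unfold Nv in HN. split.
  apply Rdiv_le_0_compat; lra.
  apply (Rmult_le_reg_r (Sv t + Iv t)); [lra|]. unfold Rdiv. rewrite Rmult_assoc, Rinv_l; lra.
Qed.

Definition MSh := Rmax (Sh 0) (bh / mh).
Lemma MSh_pos : 0 < MSh.
Proof. unfold MSh. eapply Rlt_le_trans; [|apply Rmax_r]. apply Rdiv_lt_0_compat; lra. Qed.

Lemma Sh_up t : 0 <= t -> Sh t <= MSh.
Proof.
  intros Ht.
  destruct (cmp_up_all Sh dSh bh mh 0 Hmh (RSh 0 (Rle_refl 0)) DSh) as [U _].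
  - intros s Hs. unfold dSh. destruct (q_bounds s) as [Q1 Q2]; [lra|].
    destruct (all_pos s) as [A1 [A2 A3]]; [lra|].
    assert (0 <= Cvh * (Iv s / (Sv s + Iv s)) * Sh s) by (apply Rmult_le_pos; [nra|lra]). lra.
  - apply U; auto.
Qed.

Lemma Sh_lsp : limsup_pos Sh.
Proof.
  assert (Hm : 0 < Cvh + mh) by lra.
  destruct (cmp_lo_all Sh dSh bh (Cvh + mh) 0 Hm (RSh 0 (Rle_refl 0)) DSh) as [_ L].
  - intros s Hs. unfold dSh. destruct (q_bounds s) as [Q1 Q2]; [lra|].
    destruct (all_pos s) as [A1 [A2 A3]]; [lra|].
    assert (Cvh * (Iv s / (Sv s + Iv s)) * Sh s <= Cvh * Sh s).
    { apply Rmult_le_compat_r; auto. nra. }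
    lra.
  - assert (Hp : 0 < bh / (Cvh + mh)) by (apply Rdiv_lt_0_compat; lra).
    destruct (L (bh / (Cvh + mh) / 2)) as [X [_ HX]]; [lra|].
    apply lsp_of_lower. exists (bh / (Cvh + mh) / 2), X. split; [lra|].
    intros t Ht. specialize (HX t Ht). lra.
Qed.

Definition T1 := tau + 1.
Definition MIh := Rmax (Ih T1) (Cvh * MSh / mh).

Lemma Ih_up t : T1 <= t -> Ih t <= MIh.
Proof.
  intros Ht. assert (HT1 : 0 < T1) by (unfold T1; lra).
  destruct (cmp_up_all Ih dIh (Cvh * MSh) mh T1 Hmh (rc_of_derive Ih T1 _ (DIh T1 HT1))
     (fun s Hs => DIh s ltac:(lra))) as [U _].
  - intros s Hs. unfold dIh. unfold T1 in Hs. destruct (q_bounds (s - tau)) as [Q1 Q2]; [lra|].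
    destruct (all_pos (s - tau)) as [A1 [A2 A3]]; [lra|].
    assert (Sh (s - tau) <= MSh) by (apply Sh_up; lra).
    assert (Cvh * (Iv (s - tau) / (Sv (s - tau) + Iv (s - tau))) * Sh (s - tau) <= Cvh * MSh).
    { apply Rmult_le_compat; try nra. }
    lra.
  - apply U; auto.
Qed.

Lemma MIh_pos : 0 < MIh.
Proof. unfold MIh. eapply Rlt_le_trans; [|apply Rmax_l]. apply Ih_pos. unfold T1; lra. Qed.

Lemma Sv_lsp : limsup_pos Sv.
Proof.
  assert (HMI := MIh_pos).
  assert (Hm : 0 < Chv * MIh + mv) by nra.
  assert (HT1 : 0 < T1) by (unfold T1; lra).
  destruct (cmp_lo_all Sv dSv bv (Chv * MIh + mv) T1 Hm (rc_of_derive Sv T1 _ (DSv T1 HT1))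
     (fun s Hs => DSv s ltac:(lra))) as [_ L].
  - intros s Hs. unfold dSv.
    destruct (all_pos s) as [A1 [A2 A3]]; [unfold T1 in Hs; lra|].
    assert (Ih s <= MIh) by (apply Ih_up; lra).
    assert (0 <= Ih s) by (left; apply Ih_pos; lra).
    assert (Chv * Ih s * Sv s <= Chv * MIh * Sv s) by (apply Rmult_le_compat_r; nra).
    lra.
  - assert (Hp : 0 < bv / (Chv * MIh + mv)) by (apply Rdiv_lt_0_compat; lra).
    destruct (L (bv / (Chv * MIh + mv) / 2)) as [X [_ HX]]; [lra|].
    apply lsp_of_lower. exists (bv / (Chv * MIh + mv) / 2), X. split; [lra|].
    intros t Ht. specialize (HX t Ht). lra.
Qed.

Lemma Iv_to_Ih : (forall e, 0 < e -> exists T, forall t, T <= t -> Iv t <= e) ->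
  forall e, 0 < e -> exists T, forall t, T <= t -> Ih t <= e.
Proof.
  intros HIv.
  assert (HcN := cN_pos). assert (HMS := MSh_pos).
  apply (lim_up Ih dIh mh (Cvh * MSh / cN) Hmh).
  { apply Rlt_le, Rdiv_lt_0_compat; nra. }
  { exact DIh. }
  intros e He. destruct (HIv e He) as [T0 HT0].
  exists (Rmax T0 0 + tau + 1). split. assert (Hm := Rmax_r T0 0). lra.
  intros t Ht. assert (Hm1 := Rmax_l T0 0). assert (Hm2 := Rmax_r T0 0).
  unfold dIh. set (s := t - tau).
  destruct (all_pos s) as [A1 [A2 A3]]; [unfold s; lra|].
  assert (HS : Sh s <= MSh) by (apply Sh_up; unfold s; lra).
  assert (HIs : Iv s <= e) by (apply HT0; unfold s; lra).
  assert (HNs := proj1 (proj1 Nv_bounds s ltac:(unfold s; lra))). unfold Nv in HNs.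
  assert (Hq : Iv s / (Sv s + Iv s) <= e / cN) by (apply div_bound; lra).
  assert (Hq0 : 0 <= Iv s / (Sv s + Iv s)) by (apply Rdiv_le_0_compat; lra).
  assert (Cvh * (Iv s / (Sv s + Iv s)) * Sh s <= Cvh * (e / cN) * MSh).
  { apply Rmult_le_compat; try nra. }
  replace (Cvh * MSh / cN * e) with (Cvh * (e / cN) * MSh) by (field; lra). lra.
Qed.


Lemma g_cont s : 0 < s -> continuity_pt g s.
Proof.
  intros Hs. unfold g, q. apply continuity_pt_mult.
  - apply continuity_pt_div.
    + apply (cpt_of_derive Iv s _ (DIv s Hs)).
    + apply continuity_pt_plus; [apply (cpt_of_derive Sv s _ (DSv s Hs))|apply (cpt_of_derive Iv s _ (DIv s Hs))].
    + assert (H := Nv_pos s ltac:(lra)). unfold Nv in H. lra.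
  - apply (cpt_of_derive Sh s _ (DSh s Hs)).
Qed.

Definition G x := RInt g 1 x.

Lemma g_exRInt a b : 0 < a -> 0 < b -> ex_RInt g a b.
Proof.
  intros Ha Hb. apply (ex_RInt_continuous (V:=R_CompleteNormedModule)). intros z Hz.
  apply continuity_pt_filterlim. apply g_cont.
  assert (Rmin a b > 0) by (apply Rmin_glb_lt; lra). lra.
Qed.

Lemma DG x : 0 < x -> is_derive G x (g x).
Proof.
  intros Hx. apply (is_derive_RInt (V:=R_CompleteNormedModule) g G 1 x).
  - assert (Hp : 0 < x / 2) by lra. exists (mkposreal _ Hp). intros y Hy.
    assert (Hy' : Rabs (y - x) < x / 2) by exact Hy.
    apply Rabs_def2 in Hy'. unfold G. apply (RInt_correct (V:=R_CompleteNormedModule)). apply g_exRInt; lra.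
  - apply continuity_pt_filterlim. apply g_cont; auto.
Qed.

Lemma G_mvt t : tau < t -> exists c, t - tau <= c <= t /\ G t - G (t - tau) = g c * tau.
Proof.
  intros Ht. destruct (MVT_gen G (t - tau) t g) as [c [Hc Heq]].
  - intros x Hx. rewrite Rmin_left in Hx by lra. rewrite Rmax_right in Hx by lra. apply DG; lra.
  - intros x Hx. rewrite Rmin_left in Hx by lra. rewrite Rmax_right in Hx by lra.
    apply (cpt_of_derive G x _ (DG x ltac:(lra))).
  - rewrite Rmin_left in Hc by lra. rewrite Rmax_right in Hc by lra.
    exists c. split; auto. rewrite Heq. ring.
Qed.

Definition V k t := Iv t + k * (Ih t + Cvh * (G t - G (t - tau))).
Definition dV k t := Chv * Ih t * Sv t - mv * Iv t + k * (Cvh * g t - mh * Ih t).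

Lemma DV k t : tau < t -> is_derive (V k) t (dV k t).
Proof.
  intros Ht.
  assert (H1 : is_derive (fun t => G (t - tau)) t (scal 1 (g (t - tau)))).
  { apply (is_derive_comp (K:=R_AbsRing) (V:=R_NormedModule) G (fun t => t - tau)).
    apply DG; lra.
    evar (l : R). assert (Hl : is_derive (fun t : R => t - tau) t l).
    { apply (is_derive_minus (K:=R_AbsRing) (V:=R_NormedModule)). apply is_derive_id. apply is_derive_const. }
    unfold l in Hl. replace 1 with (minus (one : R_AbsRing) zero). exact Hl.
    unfold minus, one, zero, plus, opp; simpl. ring. }
  assert (H2 := is_derive_minus (K:=R_AbsRing) (V:=R_NormedModule) G _ t _ _ (DG t ltac:(lra)) H1).
  assert (H3 := is_derive_scal _ t Cvh _ H2).
  assert (H4 := is_derive_plus (K:=R_AbsRing) (V:=R_NormedModule) _ _ t _ _ (DIh t ltac:(lra)) H3).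
  assert (H5 := is_derive_scal _ t k _ H4).
  assert (H6 := is_derive_plus (K:=R_AbsRing) (V:=R_NormedModule) _ _ t _ _ (DIv t ltac:(lra)) H5).
  unfold V. simpl in H6.
  match goal with |- is_derive _ _ ?v => replace v with
    (plus (dIv t) (k * (plus (dIh t) (Cvh * (minus (g t) (scal 1 (g (t - tau)))))))) end.
  exact H6.
  unfold plus, scal, minus, opp, mult; simpl. unfold plus, scal, minus, opp, mult; simpl.
  unfold dV, dIv, dIh, g, q. ring.
Qed.


Lemma r_choice P Qv : 0 < Qv < P -> exists r, 0 < r < 1 /\ Qv <= r * r * r * P.
Proof.
  intros H. set (d := (P - Qv) / (3 * P)).
  assert (Hd : 0 < d < 1/3).
  { unfold d. split. apply Rdiv_lt_0_compat; lra.
    apply (Rmult_lt_reg_r (3 * P)); [lra|]. unfold Rdiv. rewrite Rmult_assoc, Rinv_l; lra. }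
  exists (1 - d). split; [lra|].
  assert (Hq : Qv = (1 - 3 * d) * P) by (unfold d; field; lra).
  rewrite Hq. assert ((1 - 3*d) <= (1-d)*(1-d)*(1-d)) by nra. nra.
Qed.

Lemma main_Ih : mh * mh * mv < Cvh * Chv * bh ->
  (forall e, 0 < e -> exists T, forall t, T <= t -> Ih t <= e) -> False.
Proof.
  intros HR NIh.
  assert (HcN := cN_pos). assert (HMS := MSh_pos).
  assert (HMN : 0 < MN) by (unfold MN; eapply Rlt_le_trans; [apply Nv0|apply Rmax_l]).
  destruct (r_choice (Cvh * Chv * bh) (mh * mh * mv)) as [r [Hr Hr3]]; [split; [apply Rmult_lt_0_compat; [apply Rmult_lt_0_compat|]; lra|lra]|].
  set (Nst := bv / mv). set (Sst := bh / mh).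
  assert (HNst : 0 < Nst) by (unfold Nst; apply Rdiv_lt_0_compat; lra).
  assert (HSst : 0 < Sst) by (unfold Sst; apply Rdiv_lt_0_compat; lra).
  assert (HIv0 : forall d, 0 < d -> exists X, forall t, X <= t -> Iv t <= d).
  { apply (lim_up Iv dIv mv (Chv * MN) Hmv ltac:(nra) DIv).
    intros e He. destruct (NIh e He) as [T0 HT0]. exists (Rmax T0 1).
    split. eapply Rlt_le_trans; [|apply Rmax_r]; lra.
    intros t Ht. assert (Hm1 := Rmax_l T0 1). assert (Hm2 := Rmax_r T0 1).
    unfold dIv. destruct (all_pos t) as [A1 [A2 A3]]; [lra|].
    assert (HI : Ih t <= e) by (apply HT0; lra). assert (HI0 : 0 <= Ih t) by (left; apply Ih_pos; lra).
    assert (HN := proj2 (proj1 Nv_bounds t ltac:(lra))). unfold Nv in HN.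
    assert (Ih t * Sv t <= e * MN) by (apply Rmult_le_compat; lra).
    nra. }
  destruct (lim_lo Sv dSv bv mv Chv Hbv Hmv ltac:(lra) DSv) with (r := r) as [Xb HXb]; auto.
  { intros e He. destruct (NIh e He) as [T0 HT0]. exists (Rmax T0 1).
    split. eapply Rlt_le_trans; [|apply Rmax_r]; lra.
    intros t Ht. assert (Hm1 := Rmax_l T0 1). assert (Hm2 := Rmax_r T0 1).
    unfold dSv. destruct (all_pos t) as [A1 [A2 A3]]; [lra|].
    assert (HI : Ih t <= e) by (apply HT0; lra).
    assert (Ih t * Sv t <= e * Sv t) by (apply Rmult_le_compat_r; lra).
    nra. }
  destruct (lim_lo Sh dSh bh mh (Cvh / cN) Hbh Hmh ltac:(left; apply Rdiv_lt_0_compat; lra) DSh) with (r := r) as [Xc HXc]; auto.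
  { intros e He. destruct (HIv0 e He) as [T0 HT0]. exists (Rmax T0 1).
    split. eapply Rlt_le_trans; [|apply Rmax_r]; lra.
    intros t Ht. assert (Hm1 := Rmax_l T0 1). assert (Hm2 := Rmax_r T0 1).
    unfold dSh. destruct (all_pos t) as [A1 [A2 A3]]; [lra|].
    assert (HI : Iv t <= e) by (apply HT0; lra).
    assert (HNs := proj1 (proj1 Nv_bounds t ltac:(lra))). unfold Nv in HNs.
    assert (Hq : Iv t / (Sv t + Iv t) <= e / cN) by (apply div_bound; lra).
    assert (Cvh * (Iv t / (Sv t + Iv t)) * Sh t <= Cvh * (e / cN) * Sh t).
    { apply Rmult_le_compat_r; auto. nra. }
    replace (Cvh / cN * e) with (Cvh * (e / cN)) by (field; lra). nra. }
  destruct (proj2 Nv_bounds (Nst * (1 - r) / r)) as [Xd HXd].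
  { apply Rdiv_lt_0_compat; nra. }
  set (Ts := Rmax (Rmax Xb Xc) (Rmax Xd (tau + 1))).
  assert (HTs1 : Xb <= Ts) by (unfold Ts; eapply Rle_trans; [apply Rmax_l|apply Rmax_l]).
  assert (HTs2 : Xc <= Ts) by (unfold Ts; eapply Rle_trans; [apply Rmax_r|apply Rmax_l]).
  assert (HTs3 : Xd <= Ts) by (unfold Ts; eapply Rle_trans; [apply Rmax_l|apply Rmax_r]).
  assert (HTs4 : tau + 1 <= Ts) by (unfold Ts; eapply Rle_trans; [apply Rmax_r|apply Rmax_r]).
  set (k := Chv * r * Nst / mh).
  assert (Hk : 0 < k) by (unfold k; apply Rdiv_lt_0_compat; [apply Rmult_lt_0_compat; [apply Rmult_lt_0_compat|]; lra|lra]).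
  assert (HdV : forall t, Ts <= t -> 0 <= dV k t).
  { intros t Ht. unfold dV.
    destruct (all_pos t) as [A1 [A2 A3]]; [lra|].
    assert (HI0 : 0 <= Ih t) by (left; apply Ih_pos; lra).
    assert (HSv : r * Nst <= Sv t) by (apply HXb; lra).
    assert (HSh : r * Sst <= Sh t) by (apply HXc; lra).
    assert (HNv : Nv t <= Nst + Nst * (1 - r) / r) by (apply HXd; lra).
    assert (HNv' : r * Nv t <= Nst).
    { replace (Nst + Nst * (1 - r) / r) with (Nst / r) in HNv by (field; lra).
      apply (Rmult_le_compat_l r) in HNv; [|lra]. replace (r * (Nst / r)) with Nst in HNv by (field; lra). lra. }
    assert (HNp := Nv_pos t ltac:(lra)). unfold Nv in HNp, HNv'.
    assert (Hkm : k * mh = Chv * r * Nst) by (unfold k; field; lra).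
    assert (T1' : 0 <= Ih t * (Chv * Sv t - k * mh)) by (rewrite Hkm; apply Rmult_le_pos; nra).
    set (qq := Iv t / (Sv t + Iv t)).
    assert (Hqq : 0 <= qq) by (unfold qq; apply Rdiv_le_0_compat; lra).
    assert (HIvq : Iv t = qq * (Sv t + Iv t)) by (unfold qq; field; lra).
    assert (Hkey : mv * (Sv t + Iv t) <= k * Cvh * Sh t).
    { apply (Rmult_le_reg_l (r * mh * mh)). { apply Rmult_lt_0_compat; [apply Rmult_lt_0_compat|]; lra. }
      assert (E1 : r * mh * mh * (k * Cvh * Sh t) = r * r * mh * Chv * Cvh * Nst * Sh t) by (unfold k; field; lra).
      rewrite E1.
      assert (E2 : r * r * mh * Chv * Cvh * Nst * (r * Sst) = r * r * r * (Cvh * Chv * bh) * Nst) by (unfold Sst; field; lra).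
      assert (r * r * mh * Chv * Cvh * Nst * (r * Sst) <= r * r * mh * Chv * Cvh * Nst * Sh t).
      { apply Rmult_le_compat_l; auto. repeat (apply Rmult_le_pos; [|lra]); lra. }
      assert (mh * mh * mv * Nst <= r * r * r * (Cvh * Chv * bh) * Nst) by (apply Rmult_le_compat_r; lra).
      assert (r * mh * mh * (mv * (Sv t + Iv t)) = mh * mh * mv * (r * (Sv t + Iv t))) by ring.
      assert (mh * mh * mv * (r * (Sv t + Iv t)) <= mh * mh * mv * Nst) by (apply Rmult_le_compat_l; [left; apply Rmult_lt_0_compat; [apply Rmult_lt_0_compat|]; lra|lra]).
      lra. }
    assert (T2' : 0 <= qq * (k * Cvh * Sh t - mv * (Sv t + Iv t))) by (apply Rmult_le_pos; lra).
    unfold g, q. fold qq.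
    replace (Chv * Ih t * Sv t - mv * Iv t + k * (Cvh * (qq * Sh t) - mh * Ih t))
      with (Ih t * (Chv * Sv t - k * mh) + qq * (k * Cvh * Sh t - mv * (Sv t + Iv t)) + mv * (qq * (Sv t + Iv t) - Iv t)) by ring.
    rewrite <- HIvq. lra. }
  assert (HTs : tau < Ts) by lra.
  assert (Hmono : forall t, Ts <= t -> V k Ts <= V k t).
  { intros t Ht. apply (mono (V k) (dV k) Ts t Ht (rc_of_derive _ Ts _ (DV k Ts HTs))).
    intros s Hs; apply DV; lra. intros s Hs; apply HdV; lra. }
  set (v0 := k * Ih Ts).
  assert (Hv0 : 0 < v0) by (unfold v0; apply Rmult_lt_0_compat; [lra|apply Ih_pos; lra]).
  assert (HVTs : v0 <= V k Ts).
  { unfold V, v0. destruct (G_mvt Ts HTs) as [c [Hc Hg]]. rewrite Hg.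
    destruct (all_pos Ts) as [A1 [A2 A3]]; [lra|].
    destruct (all_pos c) as [B1 [B2 B3]]; [lra|].
    destruct (q_bounds c) as [Q1 Q2]; [lra|].
    assert (0 <= g c) by (unfold g, q; apply Rmult_le_pos; lra).
    assert (0 <= Cvh * (g c * tau)) by (apply Rmult_le_pos; [lra|apply Rmult_le_pos; lra]).
    assert (0 <= k * (Cvh * (g c * tau))) by (apply Rmult_le_pos; lra).
    nra. }
  set (W := 1 + k + k * Cvh * tau * MSh / cN).
  assert (HW : 1 <= W).
  { unfold W. assert (0 <= k * Cvh * tau * MSh / cN); [|lra].
    apply Rmult_le_pos; [|left; apply Rinv_0_lt_compat; lra].
    repeat (apply Rmult_le_pos; [|lra]); lra. }
  set (e := v0 / (2 * W)).
  assert (He : 0 < e) by (unfold e; apply Rdiv_lt_0_compat; lra).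
  destruct (HIv0 e He) as [Xe HXe]. destruct (NIh e He) as [Ye HYe].
  set (t := Rmax Ts (Rmax (Xe + tau) Ye)).
  assert (Ht1 : Ts <= t) by apply Rmax_l.
  assert (Ht2 : Xe + tau <= t) by (unfold t; eapply Rle_trans; [apply Rmax_l|apply Rmax_r]).
  assert (Ht3 : Ye <= t) by (unfold t; eapply Rle_trans; [apply Rmax_r|apply Rmax_r]).
  assert (HV := Hmono t Ht1).
  destruct (G_mvt t ltac:(lra)) as [c [Hc Hg]].
  assert (HV' : V k t = Iv t + k * (Ih t + Cvh * (g c * tau))) by (unfold V; rewrite Hg; reflexivity).
  destruct (all_pos c) as [B1 [B2 B3]]; [lra|].
  assert (HIvc : Iv c <= e) by (apply HXe; lra).
  assert (HNc := proj1 (proj1 Nv_bounds c ltac:(lra))). unfold Nv in HNc.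
  assert (Hqc : Iv c / (Sv c + Iv c) <= e / cN) by (apply div_bound; lra).
  assert (Hqc0 : 0 <= Iv c / (Sv c + Iv c)) by (apply Rdiv_le_0_compat; lra).
  assert (HShc : Sh c <= MSh) by (apply Sh_up; lra).
  assert (Hgc : g c <= e / cN * MSh) by (unfold g, q; apply Rmult_le_compat; lra).
  assert (HIvt : Iv t <= e) by (apply HXe; lra).
  assert (HIht : Ih t <= e) by (apply HYe; lra).
  assert (Cvh * (g c * tau) <= Cvh * (e / cN * MSh * tau)).
  { apply Rmult_le_compat_l; [lra|]. apply Rmult_le_compat_r; lra. }
  assert (Hsum : Iv t + k * (Ih t + Cvh * (g c * tau)) <= e * W).
  { unfold W. replace (e * (1 + k + k * Cvh * tau * MSh / cN)) with (e + k * (e + Cvh * (e / cN * MSh * tau))) by (field; lra).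
    assert (k * (Ih t + Cvh * (g c * tau)) <= k * (e + Cvh * (e / cN * MSh * tau))) by (apply Rmult_le_compat_l; lra).
    lra. }
  assert (e * W = v0 / 2) by (unfold e; field; lra).
  lra.
Qed.

End Model.

Theorem corollary1 (beta_h beta_v mu_h mu_v C_vh C_hv : R) :
  0 < beta_h -> 0 < beta_v -> 0 < mu_h -> 0 < mu_v -> 0 < C_vh -> 0 < C_hv ->
  basic_R0 beta_h mu_h mu_v C_vh C_hv > 1 ->
  forall tau : R, 0 <= tau ->
    weakly_persistent_in_D beta_h beta_v mu_h mu_v C_vh C_hv tau.
Proof.
  intros Hbh Hbv Hmh Hmv HCvh HChv HR0 tau Htau.
  unfold weakly_persistent_in_D. intros Sh Ih Sv Iv Hh Hs.
  assert (HR : mu_h * mu_h * mu_v < C_vh * C_hv * beta_h).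
  { unfold basic_R0 in HR0.
    set (X := C_vh * C_hv * beta_h / (mu_h ^ 2 * mu_v)) in HR0.
    assert (HX : 1 < X).
    { destruct (Rle_or_lt X 1) as [H|H]; auto.
      apply sqrt_le_1_alt in H. rewrite sqrt_1 in H. lra. }
    assert (Hp : 0 < mu_h ^ 2 * mu_v) by (simpl; apply Rmult_lt_0_compat; [nra|lra]).
    unfold X in HX. apply (Rmult_lt_compat_r (mu_h ^ 2 * mu_v)) in HX; auto.
    unfold Rdiv in HX. rewrite Rmult_assoc, Rinv_l in HX by lra. simpl in HX. lra. }
  assert (HIh : limsup_pos Ih).
  { destruct (classic (limsup_pos Ih)) as [H|H]; auto. exfalso.
    apply (main_Ih beta_h beta_v mu_h mu_v C_vh C_hv tau Hbh Hbv Hmh Hmv HCvh HChv Htau Sh Ih Sv Iv Hh Hs HR). apply not_lsp; auto. }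
  assert (HIv : limsup_pos Iv).
  { destruct (classic (limsup_pos Iv)) as [H|H]; auto. exfalso.
    apply (main_Ih beta_h beta_v mu_h mu_v C_vh C_hv tau Hbh Hbv Hmh Hmv HCvh HChv Htau Sh Ih Sv Iv Hh Hs HR). apply (Iv_to_Ih beta_h beta_v mu_h mu_v C_vh C_hv tau Hbh Hbv Hmh Hmv HCvh HChv Htau Sh Ih Sv Iv Hh Hs). apply not_lsp; auto. }
  split; [|split; [auto|split; [|auto]]].
  - exact (Sh_lsp beta_h beta_v mu_h mu_v C_vh C_hv tau Hbh Hbv Hmh Hmv HCvh HChv Htau Sh Ih Sv Iv Hh Hs).
  - exact (Sv_lsp beta_h beta_v mu_h mu_v C_vh C_hv tau Hbh Hbv Hmh Hmv HCvh HChv Htau Sh Ih Sv Iv Hh Hs).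
Qed.
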